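(* Let $|\psi\rangle$ be a state in a tensor-product Hilbert space $\mathcal H=\bigotimes_v\mathcal H_v$ of finite-dimensional factors. Let $U=\prod_vU_v$ be an on-site unitary, with each $U_v$ a unitary on $\mathcal H_v$. Let $A_1,\dots,A_n$ be regions and $t_1,\dots,t_n\in\mathbb R$. Then $U$ can be moved to any position in the sequence of instantaneous modular flows: for every $i\in\{1,\dots,n+1\}$, $$U\,\mathcal I_{A_n}(t_n)\cdots\mathcal I_{A_1}(t_1)|\psi\rangle=\mathcal I_{A_n}(t_n)\cdots\mathcal I_{A_i}(t_i)\,U\,\mathcal I_{A_{i-1}}(t_{i-1})\cdots\mathcal I_{A_1}(t_1)|\psi\rangle.$$ In particular, $U\,\mathcal I_{A_n}(t_n)\cdots\mathcal I_{A_1}(t_1)|\psi\rangle=\mathcal I_{A_n}(t_n)\cdots\mathcal I_{A_1}(t_1)\,U|\psi\rangle$.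
   Context: A region $X$ is a set of sites, and $\overline X$ is its complement. For a state $|\phi\rangle$, $\rho_X=\mathrm{Tr}_{\overline X}|\phi\rangle\langle\phi|$, and $\rho_X^{{\bf i}t}$ is defined spectrally on the support of $\rho_X$, with $0^{{\bf i}t}:=0$. Instantaneous modular flow: $\mathcal I_X(t)|\phi\rangle:=\rho_X^{{\bf i}t}|\phi\rangle$, where $\rho_X$ is taken from the current state $|\phi\rangle$ on which the map acts. In a product of such maps and unitaries, applied right to left, each $\mathcal I_X(t)$ uses the reduced density matrix of the state produced by everything to its right. The maps are nonlinear. *)

(* Defs.v *)
From HB Require Import structures.
From mathcomp Require Import all_boot all_order all_algebra.
From mathcomp Require Import reals exp trigo.
From mathcomp.real_closed Require Import complex.
From Stdlib Require Import ClassicalEpsilon.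
Set Implicit Arguments. Unset Strict Implicit. Unset Printing Implicit Defensive.
Import Order.TTheory GRing.Theory Num.Theory.
Local Open Scope ring_scope.
Local Open Scope complex_scope.

Section QSpin.
Variable R : realType.
(* finite set of sites, each with a local dimension d v *)
Variable V : finType.
Variable d : V -> nat.

Notation C := R[i].

(* computational basis of H = (x)_v H_v : configurations c with c v : 'I_(d v) *)
Definition conf := {dffun forall v : V, 'I_(d v)}.

(* vectors in H and linear operators on H (matrices in the product basis) *)
Definition vec := conf -> C.
Definition op := conf -> conf -> C.

Definition app (M : op) (phi : vec) : vec := fun c => \sum_(c' : conf) M c c' * phi c'.

(* |phi><phi| partially traced over the complement of X, tensored with the
   identity on the complement:  (rho_X (x) 1_{Xbar}) *)
Definition glue (X : {set V}) (a e : conf) : conf :=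
  [ffun v => if v \in X then a v else e v].

Definition rdm (X : {set V}) (phi : vec) : op := fun c c' =>
  if [forall v, (v \notin X) ==> (c v == c' v)] then
    \sum_(e : conf | [forall v, (v \in X) ==> (e v == c v)])
       phi e * (phi (glue X c' e))^*
  else 0.

(* the scalar function lambda |-> lambda^{it} on positive reals, 0^{it} := 0 *)
Definition pow_it (t : R) (z : C) : C :=
  if 0 < z then
    let r := complex.Re z in cos (t * ln r) +i* sin (t * ln r)
  else 0.

(* spectral functional calculus: rho^{it} is the operator acting as
   lambda^{it} on each eigenspace (lambda) of rho. *)
Definition is_spec_pow_it (rho : op) (t : R) (M : op) : Prop :=
  forall (lam : C) (v : vec), app rho v = (fun c => lam * v c) ->
    app M v = (fun c => pow_it t lam * v c).

Definition spec_pow_it (rho : op) (t : R) : op :=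
  epsilon (inhabits (fun _ _ => 0)) (is_spec_pow_it rho t).

(* instantaneous modular flow I_X(t) |phi> = rho_X^{it} |phi> with rho_X
   taken from phi itself *)
Definition imf (X : {set V}) (t : R) (phi : vec) : vec :=
  app (spec_pow_it (rdm X phi) t) phi.

(* apply the flows of the list s = [:: (A_1,t_1); ...; (A_n,t_n)] in order:
   first I_{A_1}(t_1), last I_{A_n}(t_n) *)
Definition flows (s : seq ({set V} * R)) (phi : vec) : vec :=
  foldl (fun ph p => imf p.1 p.2 ph) phi s.

Definition adj n (M : 'M[C]_n) : 'M[C]_n := \matrix_(i, j) (M j i)^*.
Definition unitary n (M : 'M[C]_n) : Prop := M *m adj M = 1%:M /\ adj M *m M = 1%:M.

Definition onsite (U : forall v : V, 'M[C]_(d v)) : op :=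
  fun c c' => \prod_(v : V) U v (c v) (c' v).

Definition normalized (phi : vec) : Prop := \sum_(c : conf) `|phi c| ^+ 2 = 1.

End QSpin.

(* Main.v *)
Require Import Defs.
From HB Require Import structures.
From mathcomp Require Import all_boot all_order all_algebra.
From mathcomp Require Import reals exp trigo.
From mathcomp.real_closed Require Import complex.
From Stdlib Require Import ClassicalEpsilon FunctionalExtensionality.
Import Order.TTheory GRing.Theory Num.Theory.
Local Open Scope ring_scope.
Local Open Scope complex_scope.

Section Spec.
Variable R : realType.
Variable V : finType.
Variable d : V -> nat.
Notation C := R[i].
Notation conf := (conf d).
Notation vec := (vec R d).
Notation op := (op R d).
Notation N := #|{: conf}|.

Definition tomx (M : op) : 'M[C]_N := \matrix_(i, j) M (enum_val i) (enum_val j).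
Definition tocv (v : vec) : 'cV[C]_N := \col_i v (enum_val i).

Lemma appE (M : op) (v : vec) c :
  app M v c = \sum_(j < N) M c (enum_val j) * v (enum_val j).
Proof. by rewrite /app (big_enum_val (A := predT)). Qed.

Lemma app_mx (M : op) v c : app M v c = (tomx M *m tocv v) (enum_rank c) 0.
Proof.
rewrite appE mxE; apply: eq_bigr => j _; by rewrite !mxE enum_rankK.
Qed.

Lemma spec_decomp (rho : op) (t : R) :
  (forall c c', rho c' c = (rho c c')^*) ->
  (exists M, is_spec_pow_it rho t M) /\
  exists (lam : 'I_N -> C) (b : 'I_N -> vec),
    (forall k, app rho (b k) = (fun c => lam k * b k c)) /\
    (forall phi : vec, exists al : 'I_N -> C, phi = (fun c => \sum_k al k * b k c)).
Proof.
move=> Hh.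
set A := tomx rho.
have hA : (A ^t* )%sesqui = A.
  apply/matrixP => i j; rewrite /A !mxE; exact: (esym (Hh _ _)).
have /orthomx_spectralP HA : A \is normalmx by apply/normalmxP; rewrite hA.
set P := spectralmx A in HA; set D := spectral_diag A in HA.
set Q := invmx P in HA.
have Pu : P \in unitmx by apply: spectral_unit.
have QP : Q *m P = 1%:M by apply: mulVmx.
have PQ : P *m Q = 1%:M by apply: mulmxV.
split.
  pose D' := map_mx (pow_it t) D.
  exists (fun c c' => (Q *m diag_mx D' *m P) (enum_rank c) (enum_rank c')).
  move=> lam v Hv; apply: functional_extensionality => c.
  set x := tocv v.
  have Ax : A *m x = lam *: x.
    apply/matrixP => i j; rewrite (ord1 j) !mxE.
    have := congr1 (fun f => f (enum_val i)) Hv; rewrite app_mx enum_valK /= => <-.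
    by rewrite mxE.
  have Dy : diag_mx D *m (P *m x) = lam *: (P *m x).
    have PA : P *m A = diag_mx D *m P by rewrite HA !mulmxA PQ mul1mx.
    by rewrite mulmxA -PA -mulmxA Ax scalemxAr.
  have D'y : diag_mx D' *m (P *m x) = pow_it t lam *: (P *m x).
    move: Dy; set y := P *m x => Dy.
    apply/matrixP => k j; move/matrixP: Dy => /(_ k j); rewrite !mul_diag_mx !mxE.
    move: (\sum_(j0 < _) _) => z.
    have [->|nz] := eqVneq z 0; first by rewrite !mulr0.
    by move=> /(mulIf nz) ->.
  rewrite appE.
  have -> : \sum_(j < N) (Q *m diag_mx D' *m P) (enum_rank c) (enum_rank (enum_val j)) * v (enum_val j)
     = ((Q *m diag_mx D' *m P) *m x) (enum_rank c) 0.
    by rewrite mxE; apply: eq_bigr => j _; rewrite enum_valK !mxE.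
  rewrite -!mulmxA D'y -scalemxAr mulmxA QP mul1mx !mxE enum_rankK //.
exists (fun k => D 0 k), (fun k c => Q (enum_rank c) k); split.
  move=> k; apply: functional_extensionality => c.
  have AQ : A *m Q = Q *m diag_mx D by rewrite HA -!mulmxA PQ mulmx1.
  rewrite appE.
  have -> : \sum_(j < N) rho c (enum_val j) * Q (enum_rank (enum_val j)) k = (A *m Q) (enum_rank c) k.
    by rewrite mxE; apply: eq_bigr => j _; rewrite enum_valK !mxE enum_rankK.
  by rewrite AQ mul_mx_diag mxE mulrC.
move=> phi; exists (fun k => (P *m tocv phi) k 0); apply: functional_extensionality => c.
have := congr1 (fun M : 'cV_N => M (enum_rank c) 0) (mulKmx Pu (tocv phi)).
rewrite [in X in _ = X -> _]mxE enum_rankK => <-.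
by rewrite mxE; apply: eq_bigr => k _; rewrite mulrC.
Qed.
End Spec.
Arguments spec_decomp {R V d} rho t.
Section Cov.
Variable R : realType.
Variable V : finType.
Variable d : V -> nat.
Notation C := R[i].
Notation conf := (conf d).
Notation vec := (vec R d).
Notation op := (op R d).

Lemma sum_prod (F : forall v : V, 'I_(d v) -> C) :
  \sum_(e : conf) \prod_(v : V) F v (e v) = \prod_(v : V) \sum_(k : 'I_(d v)) F v k.
Proof.
pose T_ := fun v => ('I_(d v) : finType).
pose P_ := fun v => [ffun k : T_ v => F v k].
transitivity (\sum_(t : fprod T_) \prod_(v in V) P_ v (t v)).
  rewrite (reindex (@dffun_of_fprod V T_)); last exact/onW_bij/dffun_of_fprod_bij.
  apply: eq_bigr => t _; apply: eq_bigr => v _; by rewrite /P_ !ffunE.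
rewrite big_fprod.
symmetry.
transitivity (\prod_(v : V) \sum_(j in tagged_with T_ v) untag 0 (P_ v) j).
  apply: eq_bigr => v _; rewrite -(big_tag (fun v (k : T_ v) => P_ v k)); apply: eq_bigr => k _; by rewrite ffunE.
exact: bigA_distr_big_dep.
Qed.

Lemma sum2_prod (G : forall v : V, 'I_(d v) -> 'I_(d v) -> C) :
  \sum_(e : conf) \sum_(e' : conf) \prod_(v : V) G v (e v) (e' v) =
  \prod_(v : V) \sum_(k : 'I_(d v)) \sum_(k' : 'I_(d v)) G v k k'.
Proof.
transitivity (\sum_(e : conf) \prod_(v : V) \sum_(k' : 'I_(d v)) G v (e v) k').
  by apply: eq_bigr => e _; rewrite (sum_prod (fun v k' => G v (e v) k')).
exact: (sum_prod (fun v k => \sum_(k' : 'I_(d v)) G v k k')).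
Qed.

Lemma prod_bool (I : finType) (P : I -> bool) :
  \prod_(i : I) ((P i)%:R : C) = ([forall i, P i])%:R.
Proof.
case: (boolP [forall i, P i]) => [/forallP H|/forallPn [i Hi]].
  by rewrite big1 // => i _; rewrite H.
by rewrite (bigD1 i) //= (negbTE Hi) mul0r.
Qed.

Lemma sum4 (F : conf -> conf -> conf -> conf -> C) :
  \sum_e \sum_e' \sum_f \sum_g F e e' f g = \sum_f \sum_g \sum_e \sum_e' F e e' f g.
Proof.
under eq_bigr => e _ do rewrite exchange_big.
rewrite exchange_big.
under eq_bigr => f _ do under eq_bigr => e _ do rewrite exchange_big.
by under eq_bigr => f _ do rewrite exchange_big.
Qed.


Definition kapb (X : {set V}) v (a a' x x' : 'I_(d v)) : bool :=
  if v \in X then (x == a) && (x' == a') else (a == a') && (x == x').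

Definition kap (X : {set V}) (c c' e e' : conf) : C :=
  \prod_(v : V) (kapb X v (c v) (c' v) (e v) (e' v))%:R.

Lemma rdmE X (phi : vec) c c' :
  rdm X phi c c' = \sum_e \sum_e' kap X c c' e e' * (phi e * (phi e')^*).
Proof.
rewrite /kap.
under eq_bigr => e _ do under eq_bigr => e' _ do rewrite prod_bool.
rewrite /rdm; case: ifP => Hb; last first.
  symmetry; apply: big1 => e _; apply: big1 => e' _.
  case: forallP => [H|]; last by rewrite mul0r.
  exfalso; move/negbT: Hb => /forallPn [v]; rewrite negb_imply => /andP[vX /negP]; apply.
  by have := H v; rewrite /kapb (negbTE vX) => /andP[].
rewrite big_mkcond; apply: eq_bigr => e _.
have key : forall e' : conf, [forall v, kapb X v (c v) (c' v) (e v) (e' v)] =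
    [forall v, (v \in X) ==> (e v == c v)] && (e' == glue X c' e).
  move=> e'; apply/forallP/andP => [H|[/forallP H1 /eqP ->] v].
    split.
      apply/forallP => v; apply/implyP => vX.
      by have := H v; rewrite /kapb vX => /andP[].
    apply/eqP/ffunP => v; rewrite ffunE; have := H v; rewrite /kapb.
    by case: ifP => _ /andP[_ /eqP ->].
  rewrite /kapb ffunE; case: ifP => vX; rewrite vX eqxx andbT.
    by have := H1 v; rewrite vX.
  by have := forallP Hb v; rewrite vX.
under eq_bigr => e' _ do rewrite key.
case: ifP => He /=.
  rewrite (bigD1 (glue X c' e)) //= eqxx mul1r big1 ?addr0 // => e' /negbTE ->.
  by rewrite mul0r.
by rewrite big1 // => e' _; rewrite mul0r.
Qed.

Lemma ccK (x : C) : (x^*)^* = x.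
Proof. exact: conjCK. Qed.

Lemma rdm_herm X (phi : vec) c c' : rdm X phi c' c = (rdm X phi c c')^*.
Proof.
rewrite !rdmE rmorph_sum exchange_big; apply: eq_bigr => e' _.
rewrite rmorph_sum; apply: eq_bigr => e _.
rewrite !rmorphM /= ccK.
have -> : (kap X c c' e' e)^* = kap X c' c e e'.
  rewrite /kap rmorph_prod; apply: eq_bigr => v _; rewrite rmorph_nat /kapb.
  case: ifP => _; first by rewrite andbC.
  by rewrite eq_sym [e v == _]eq_sym.
by rewrite [_ * phi e]mulrC.
Qed.

End Cov.
Arguments sum_prod {R V d} F.
Arguments sum2_prod {R V d} G.
Arguments prod_bool {R I} P.
Arguments sum4 {R V d} F.
Arguments kapb {V d} X v a a' x x'.
Arguments kap {R V d} X c c' e e'.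
Arguments rdmE {R V d} X phi c c'.
Arguments rdm_herm {R V d} X phi c c'.
Arguments ccK {R} x.
Section Cov2.
Variable R : realType.
Variable V : finType.
Variable d : V -> nat.
Notation C := R[i].
Notation conf := (conf d).
Notation vec := (vec R d).
Notation op := (op R d).
Variable U : forall v : V, 'M[C]_(d v).
Hypothesis HU : forall v, unitary (U v).
Notation W := (onsite U).

Lemma uni1 v (a b : 'I_(d v)) : \sum_k (U v k a)^* * U v k b = (a == b)%:R.
Proof.
have := congr1 (fun M : 'M_(d v) => M a b) (proj2 (HU v)).
by rewrite /= !mxE => <-; apply: eq_bigr => k _; rewrite !mxE.
Qed.

Lemma uni2 v (a b : 'I_(d v)) : \sum_k U v a k * (U v b k)^* = (a == b)%:R.
Proof.
have := congr1 (fun M : 'M_(d v) => M a b) (proj1 (HU v)).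
by rewrite /= !mxE => <-; apply: eq_bigr => k _; rewrite !mxE.
Qed.

Lemma W_unit (a b : conf) : \sum_c (W c a)^* * W c b = (a == b)%:R.
Proof.
rewrite /onsite.
transitivity (\sum_(c : conf) \prod_v ((U v (c v) (a v))^* * U v (c v) (b v))).
  by apply: eq_bigr => c _; rewrite rmorph_prod -big_split.
rewrite (sum_prod (fun v k => (U v k (a v))^* * U v k (b v))).
under eq_bigr => v _ do rewrite uni1.
rewrite prod_bool.
have -> : [forall v, a v == b v] = (a == b); last by [].
apply/forallP/eqP => [H|-> v //]; apply/ffunP => v; exact/eqP/H.
Qed.

Lemma sum2_delta n (a a' : 'I_n) (h : 'I_n -> 'I_n -> C) :
  \sum_k \sum_k' ((k == a) && (k' == a'))%:R * h k k' = h a a'.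
Proof.
rewrite (bigD1 a) //=.
rewrite [X in _ + X]big1 ?addr0; last first.
  by move=> k /negbTE nk; rewrite big1 // => k' _; rewrite nk mul0r.
rewrite (bigD1 a') //= !eqxx mul1r [X in _ + X]big1 ?addr0 //.
by move=> k' /negbTE nk; rewrite nk andbF mul0r.
Qed.

Lemma sum_diag n (h : 'I_n -> 'I_n -> C) :
  \sum_k \sum_k' (k == k')%:R * h k k' = \sum_k h k k.
Proof.
apply: eq_bigr => k _; rewrite (bigD1 k) //= eqxx mul1r [X in _ + X]big1 ?addr0 //.
by move=> k' nk; rewrite eq_sym (negbTE nk) mul0r.
Qed.

Lemma site X v (a a' x x' : 'I_(d v)) :
  \sum_k \sum_k' (kapb X v a a' k k')%:R * (U v k x * (U v k' x')^*) =
  \sum_k \sum_k' U v a k * (kapb X v k k' x x')%:R * (U v a' k')^*.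
Proof.
rewrite /kapb; have [vX|vX] := boolP (v \in X); rewrite ?(negbTE vX) ?vX.
  rewrite sum2_delta.
  transitivity (\sum_k \sum_k' ((k == x) && (k' == x'))%:R * (U v a k * (U v a' k')^*)).
    by rewrite sum2_delta.
  apply: eq_bigr => k _; apply: eq_bigr => k' _.
  by rewrite mulrA [_ * U v a k]mulrC (eq_sym x k) (eq_sym x' k').
transitivity ((a == a')%:R * \sum_k \sum_k' (k == k')%:R * (U v k x * (U v k' x')^*)).
  rewrite mulr_sumr; apply: eq_bigr => k _; rewrite mulr_sumr; apply: eq_bigr => k' _.
  by case: (a == a'); rewrite ?mul1r ?mul0r.
transitivity ((x == x')%:R * \sum_k \sum_k' (k == k')%:R * (U v a k * (U v a' k')^*)); last first.
  rewrite mulr_sumr; apply: eq_bigr => k _; rewrite mulr_sumr; apply: eq_bigr => k' _.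
  by case: (x == x'); case: (k == k'); rewrite /= ?(mulr1n, mulr0n, mul1r, mul0r, mulr0, mulr1).
rewrite !sum_diag uni2.
under eq_bigr => k _ do rewrite mulrC.
by rewrite uni1 mulrC eq_sym.
Qed.


Lemma Z1 X c c' (f g : conf) :
  \sum_e \sum_e' kap X c c' e e' * (W e f * (W e' g)^*) =
  \prod_v \sum_k \sum_k' (kapb X v (c v) (c' v) k k')%:R * (U v k (f v) * (U v k' (g v))^*).
Proof.
rewrite -(sum2_prod (fun v k k' => (kapb X v (c v) (c' v) k k')%:R * (U v k (f v) * (U v k' (g v))^*))).
apply: eq_bigr => e _; apply: eq_bigr => e' _.
by rewrite /kap /onsite rmorph_prod -!big_split.
Qed.

Lemma Z2 X c c' (f g : conf) :
  \sum_a \sum_b W c a * kap X a b f g * (W c' b)^* =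
  \prod_v \sum_k \sum_k' U v (c v) k * (kapb X v k k' (f v) (g v))%:R * (U v (c' v) k')^*.
Proof.
rewrite -(sum2_prod (fun v k k' => U v (c v) k * (kapb X v k k' (f v) (g v))%:R * (U v (c' v) k')^*)).
apply: eq_bigr => e _; apply: eq_bigr => e' _.
by rewrite /kap /onsite rmorph_prod -!big_split.
Qed.

Lemma expand1 (K : conf -> conf -> C) (A B : op) (phi : vec) :
  \sum_e \sum_e' K e e' * (app A phi e * (app B phi e')^*) =
  \sum_f \sum_g (phi f * (phi g)^*) * \sum_e \sum_e' K e e' * (A e f * (B e' g)^*).
Proof.
transitivity (\sum_e \sum_e' \sum_f \sum_g K e e' * (A e f * (B e' g)^*) * (phi f * (phi g)^*)).
  apply: eq_bigr => e _; apply: eq_bigr => e' _.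
  rewrite /app rmorph_sum mulr_suml mulr_sumr; apply: eq_bigr => f _.
  rewrite mulr_sumr mulr_sumr; apply: eq_bigr => g _.
  by rewrite rmorphM /= [in LHS]mulrACA !mulrA.
rewrite sum4; apply: eq_bigr => f _; apply: eq_bigr => g _.
rewrite mulr_sumr; apply: eq_bigr => e _; rewrite mulr_sumr; apply: eq_bigr => e' _.
by rewrite mulrC.
Qed.

Lemma expand2 (K : conf -> conf -> conf -> conf -> C) (Wl Wr : conf -> C) (phi : vec) :
  \sum_a \sum_b Wl a * (\sum_f \sum_g K a b f g * (phi f * (phi g)^*)) * Wr b =
  \sum_f \sum_g (phi f * (phi g)^*) * \sum_a \sum_b Wl a * K a b f g * Wr b.
Proof.
transitivity (\sum_a \sum_b \sum_f \sum_g Wl a * K a b f g * Wr b * (phi f * (phi g)^*)).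
  apply: eq_bigr => a _; apply: eq_bigr => b _.
  rewrite mulr_sumr mulr_suml; apply: eq_bigr => f _.
  rewrite mulr_sumr mulr_suml; apply: eq_bigr => g _.
  by rewrite mulrA mulrAC.
rewrite sum4; apply: eq_bigr => f _; apply: eq_bigr => g _.
rewrite mulr_sumr; apply: eq_bigr => e _; rewrite mulr_sumr; apply: eq_bigr => e' _.
by rewrite mulrC.
Qed.

Lemma rdm_cov X (phi : vec) c c' :
  rdm X (app W phi) c c' = \sum_a \sum_b W c a * rdm X phi a b * (W c' b)^*.
Proof.
rewrite rdmE expand1.
under [RHS]eq_bigr => a _ do under eq_bigr => b _ do rewrite rdmE.
rewrite (expand2 (kap X) (W c) (fun b => (W c' b)^*)).
apply: eq_bigr => f _; apply: eq_bigr => g _; congr (_ * _).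
rewrite Z1 Z2; apply: eq_bigr => v _; exact: site.
Qed.


Definition comp (M N : op) : op := fun c c' => \sum_k M c k * N k c'.

Lemma app_comp (M N : op) (v : vec) : app (comp M N) v = app M (app N v).
Proof.
apply: functional_extensionality => c; rewrite /app /comp.
under eq_bigr => c' _ do rewrite mulr_suml.
rewrite exchange_big; apply: eq_bigr => k _; rewrite mulr_sumr.
by apply: eq_bigr => c' _; rewrite mulrA.
Qed.

Definition Wdag : op := fun c c' => (W c' c)^*.

Lemma rdm_covE X (phi : vec) : rdm X (app W phi) = comp (comp W (rdm X phi)) Wdag.
Proof.
apply: functional_extensionality => c; apply: functional_extensionality => c'.
rewrite rdm_cov /comp /Wdag exchange_big; apply: eq_bigr => b _.
by rewrite mulr_suml.
Qed.

Lemma WdagW (v : vec) : app Wdag (app W v) = v.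
Proof.
rewrite -app_comp; apply: functional_extensionality => c.
rewrite /app /comp /Wdag.
under eq_bigr => c' _ do rewrite W_unit.
rewrite (bigD1 c) //= eqxx mul1r big1 ?addr0 // => c' nc.
by rewrite eq_sym (negbTE nc) mul0r.
Qed.

Lemma cov_app X (phi v : vec) :
  app (rdm X (app W phi)) (app W v) = app W (app (rdm X phi) v).
Proof. by rewrite rdm_covE !app_comp WdagW. Qed.

Lemma app_scal (M : op) (a : C) (v : vec) :
  app M (fun c => a * v c) = (fun c => a * app M v c).
Proof.
apply: functional_extensionality => c; rewrite /app mulr_sumr.
by apply: eq_bigr => c' _; rewrite mulrCA.
Qed.

Lemma app_lin (M : op) n (al : 'I_n -> C) (b : 'I_n -> vec) :
  app M (fun c => \sum_k al k * b k c) = (fun c => \sum_k al k * app M (b k) c).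
Proof.
apply: functional_extensionality => c; rewrite /app.
under eq_bigr => c' _ do rewrite mulr_sumr.
rewrite exchange_big; apply: eq_bigr => k _; rewrite mulr_sumr.
by apply: eq_bigr => c' _; rewrite mulrCA.
Qed.

Lemma imf_cov X t (phi : vec) : imf X t (app W phi) = app W (imf X t phi).
Proof.
rewrite /imf.
have [[M0 HM0] [lam [b [Hb Hdec]]]] := spec_decomp _ t (rdm_herm X phi).
have [[M1 HM1] _] := spec_decomp _ t (rdm_herm X (app W phi)).
have HS := epsilon_spec (inhabits (fun _ _ => 0)) (is_spec_pow_it (rdm X phi) t) (ex_intro _ M0 HM0).
have HS' := epsilon_spec (inhabits (fun _ _ => 0)) (is_spec_pow_it (rdm X (app W phi)) t) (ex_intro _ M1 HM1).
rewrite /spec_pow_it.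
move: HS HS'.
set S := epsilon _ (is_spec_pow_it (rdm X phi) t).
set S' := epsilon _ (is_spec_pow_it (rdm X (app W phi)) t).
move=> HS HS'.
have [al Hal] := Hdec phi.
have eW : forall k, app (rdm X (app W phi)) (app W (b k)) = (fun c => lam k * app W (b k) c).
  by move=> k; rewrite cov_app Hb app_scal.
transitivity (app S' (app W (fun c => \sum_k al k * b k c))); first by rewrite -Hal.
transitivity (app W (app S (fun c => \sum_k al k * b k c))); last by rewrite -Hal.
have -> : app S (fun c => \sum_k al k * b k c) = (fun c => \sum_k (al k * pow_it t (lam k)) * b k c).
  rewrite app_lin; apply: functional_extensionality => c; apply: eq_bigr => k _.
  by rewrite (HS _ _ (Hb k)) mulrA.
rewrite !app_lin; apply: functional_extensionality => c; apply: eq_bigr => k _.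
by rewrite (HS' _ _ (eW k)) mulrA.
Qed.


Lemma flows_cov s (phi : vec) : app W (flows s phi) = flows s (app W phi).
Proof.
elim: s phi => [//|[X t] s IH] phi /=.
by rewrite /flows /= -/(flows s _) IH imf_cov.
Qed.

End Cov2.

Theorem lemma5 (R : realType) (V : finType) (d : V -> nat)
  (psi : vec R d) (Hpsi : normalized psi)
  (U : forall v : V, 'M[R[i]]_(d v)) (HU : forall v, unitary (U v))
  (s : seq ({set V} * R)) (i : nat) (Hi : (i <= size s)%N) :
  app (onsite U) (flows s psi) =
  flows (drop i s) (app (onsite U) (flows (take i s) psi)).
Proof.
rewrite -(@flows_cov R V d U HU).
by rewrite -{1}(cat_take_drop i s) /flows foldl_cat.
Qed.
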